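(* Let $(S, \cdot)$ be a semigroup, let $r$ be an idempotent in $J(S)$, and let $R: \mathcal{P}_f({}^{\mathbb{N}}S) \to r$ be a function. Then there exist a function $\mu: \mathcal{P}_f({}^{\mathbb{N}}S) \to \mathbb{N}$, $\alpha \in \times_{F \in \mathcal{P}_f({}^{\mathbb{N}}S)} S^{\mu(F) + 1}$ and $\tau \in \times_{F \in \mathcal{P}_f({}^{\mathbb{N}}S)} \mathcal{J}_{\mu(F)}$ such that (1) if $F, G \in \mathcal{P}_f({}^{\mathbb{N}}S)$ and $F \subsetneq G$, then $\tau(F)(\mu(F)) < \tau(G)(1)$; and (2) if $m \in \mathbb{N}$, $G_1, \ldots, G_m \in \mathcal{P}_f({}^{\mathbb{N}}S)$ with $G_1 \subsetneq \cdots \subsetneq G_m$, and $f_i \in G_i$ for each $i \in \{1, \ldots, m\}$, then $\prod_{i=1}^{m} x(\mu(G_i), \alpha(G_i), \tau(G_i), f_i) \in R(G_1)$ (product taken in increasing order of $i$).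
   Context: ${}^{\mathbb{N}}S$ is the set of all sequences $f:\mathbb{N}\to S$; $\mathcal{P}_f(X)$ is the set of nonempty finite subsets of $X$. For $k\in\mathbb{N}$, $\mathcal{J}_k=\{t\in\mathbb{N}^k: t(1)<t(2)<\cdots<t(k)\}$. For $k\in\mathbb{N}$, $a\in S^{k+1}$, $t\in\mathcal{J}_k$ and $f\in{}^{\mathbb{N}}S$, $x(k,a,t,f)=\big(\prod_{j=1}^k a(j)f(t(j))\big)a(k+1) = a(1)f(t(1))a(2)f(t(2))\cdots a(k)f(t(k))a(k+1)$. A set $A\subseteq S$ is a J-set if for every $F\in\mathcal{P}_f({}^{\mathbb{N}}S)$ there exist $k\in\mathbb{N}$, $a\in S^{k+1}$ and $t\in\mathcal{J}_k$ such that $x(k,a,t,f)\in A$ for all $f\in F$. $\beta S$ is the set of ultrafilters on $S$ with $p\cdot q = \{A\subseteq S: \{x : x^{-1}A\in q\}\in p\}$, $x^{-1}A=\{y: xy\in A\}$; $J(S)=\{p\in\beta S: \text{every member of } p \text{ is a J-set}\}$, and $r$ is idempotent if $r\cdot r=r$. *)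

(* Defs.v *)
From Stdlib Require Import List Arith Lia.
Import ListNotations.

Section Defs.
Context {T : Type} (op : T -> T -> T).

(* Sequences f : N -> T, N = {1,2,...}; value at 0 is irrelevant. *)
Definition seqS := nat -> T.

(* F is in P_f(X): a nonempty finite set (finite = enumerated by a list). *)
Definition Pf {X : Type} (F : X -> Prop) : Prop :=
  (exists l : list X, forall x, F x <-> In x l) /\ (exists x, F x).

Definition proper_subset {X : Type} (F G : X -> Prop) : Prop :=
  (forall x, F x -> G x) /\ (exists x, G x /\ ~ F x).

(* t in J_k: t(1) < ... < t(k), all in N (>= 1); a k-tuple is coded as a
   function on nat with 1-based indices 1..k. *)
Definition Jk (k : nat) (t : nat -> nat) : Prop :=
  (forall i, 1 <= i <= k -> 1 <= t i) /\
  (forall i j, 1 <= i -> i < j -> j <= k -> t i < t j).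

Fixpoint xaux (a : nat -> T) (t : nat -> nat) (f : seqS) (n j : nat) : T :=
  match n with
  | 0 => a j
  | Datatypes.S n' => op (op (a j) (f (t j))) (xaux a t f n' (Datatypes.S j))
  end.

(* x(k,a,t,f) = a(1) f(t(1)) a(2) ... a(k) f(t(k)) a(k+1) *)
Definition xkatf (k : nat) (a : nat -> T) (t : nat -> nat) (f : seqS) : T :=
  xaux a t f k 1.

(* lprod g n = g(1) g(2) ... g(n+1) (left to right) *)
Fixpoint lprod (g : nat -> T) (n : nat) : T :=
  match n with
  | 0 => g 1
  | Datatypes.S n' => op (lprod g n') (g (Datatypes.S (Datatypes.S n')))
  end.

Definition JSet (A : T -> Prop) : Prop :=
  forall F : seqS -> Prop, Pf F ->
    exists k : nat, 1 <= k /\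
    exists (a : nat -> T) (t : nat -> nat),
      Jk k t /\ forall f, F f -> A (xkatf k a t f).

Definition ultrafilter (p : (T -> Prop) -> Prop) : Prop :=
  p (fun _ => True) /\
  ~ p (fun _ => False) /\
  (forall A B : T -> Prop, p A -> (forall x, A x -> B x) -> p B) /\
  (forall A B : T -> Prop, p A -> p B -> p (fun x => A x /\ B x)) /\
  (forall A : T -> Prop, p A \/ p (fun x => ~ A x)).

Definition uprod (p q : (T -> Prop) -> Prop) : (T -> Prop) -> Prop :=
  fun A => p (fun x => q (fun y => A (op x y))).

Definition in_JS (p : (T -> Prop) -> Prop) : Prop :=
  ultrafilter p /\ forall A, p A -> JSet A.

Definition idempotent (r : (T -> Prop) -> Prop) : Prop :=
  forall A, uprod r r A <-> r A.

End Defs.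

(* Main.v *)
Require Import Defs.
From Stdlib Require Import List Arith Lia.
From Stdlib Require Import Classical ClassicalEpsilon FunctionalExtensionality PropExtensionality.
Import ListNotations.

Fixpoint subs {X : Type} (l : list X) : list (list X) :=
  match l with
  | [] => [[]]
  | a :: l => map (cons a) (subs l) ++ subs l
  end.

Lemma enum_sub {X : Type} (l : list X) : forall (G : X -> Prop),
  (forall x, G x -> In x l) ->
  exists l', In l' (subs l) /\ (forall x, G x <-> In x l') /\ length l' <= length l /\
    ((exists x, In x l /\ ~ G x) -> length l' < length l).
Proof.
  induction l as [|a l IH]; intros G HG.
  - exists []. simpl. split; [left; reflexivity|]. split; [|split; [lia|]].
    + intros x; split; [apply HG | intros []].
    + intros [x [[] _]].
  - destruct (classic (G a)) as [Ga|nGa].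
    + destruct (IH (fun x => G x /\ x <> a)) as [l'' [Hin [Hen [Hlen Hstr]]]].
      { intros x [Gx nx]. destruct (HG x Gx); [congruence|assumption]. }
      exists (a :: l''). split; [simpl; apply in_or_app; left; apply in_map; assumption|].
      split; [|split].
      * intros x. split.
        -- intros Gx. destruct (classic (x = a)) as [e|ne]; [left; auto|right; apply Hen; auto].
        -- intros [e|i]; [subst; auto| apply Hen in i; tauto].
      * simpl; lia.
      * intros [x [Hx nGx]]. simpl. destruct Hx as [e|Hx]; [subst; tauto|].
        assert (length l'' < length l); [apply Hstr; exists x; split; [auto|tauto]|lia].
    + destruct (IH G) as [l'' [Hin [Hen [Hlen Hstr]]]].
      { intros x Gx. destruct (HG x Gx); [subst; tauto|assumption]. }
      exists l''. split; [simpl; apply in_or_app; right; auto|].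
      split; [auto|split; [simpl; lia|]]. intros _. simpl; lia.
Qed.

Definition sz {X : Type} (F : X -> Prop) (n : nat) : Prop :=
  exists l, (forall x, F x <-> In x l) /\ length l <= n.

Lemma sz_sub {X : Type} (F G : X -> Prop) n : sz F n -> (forall x, G x -> F x) -> sz G n.
Proof.
  intros [l [Hl Hn]] HGF. destruct (enum_sub l G) as [l' [_ [H1 [H2 _]]]].
  { intros x Gx. apply Hl; auto. }
  exists l'. split; [auto|lia].
Qed.

Lemma sz_proper {X : Type} (F G : X -> Prop) n : sz F (S n) -> proper_subset G F -> sz G n.
Proof.
  intros [l [Hl Hn]] [HGF [x [Fx nGx]]]. destruct (enum_sub l G) as [l' [_ [H1 [H2 H3]]]].
  { intros y Gy. apply Hl; auto. }
  exists l'. split; [auto|]. assert (length l' < length l); [|lia].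
  apply H3. exists x; split; [apply Hl; auto|auto].
Qed.

Lemma sz_mono {X : Type} (F : X -> Prop) n m : sz F n -> n <= m -> sz F m.
Proof. intros [l [H1 H2]] Hm. exists l; split; [auto|lia]. Qed.

Lemma proper_eq {X : Type} (F G : X -> Prop) l : (forall x, F x <-> In x l) -> proper_subset G F ->
  exists l', In l' (subs l) /\ G = (fun x => In x l').
Proof.
  intros Hl [HGF _]. destruct (enum_sub l G) as [l' [Hin [H1 _]]].
  { intros y Gy. apply Hl; auto. }
  exists l'. split; [auto|]. apply functional_extensionality; intros x.
  apply propositional_extensionality; auto.
Qed.

Fixpoint sumL {X : Type} (g : X -> nat) (L : list X) : nat :=
  match L with [] => 0 | x :: L => g x + sumL g L end.

Lemma sumL_le {X : Type} (g : X -> nat) L x : In x L -> g x <= sumL g L.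
Proof. induction L; simpl; intros []; subst; [lia|]. specialize (IHL H); lia. Qed.


Lemma r_mono {T : Type} (r : (T -> Prop) -> Prop) (A B : T -> Prop) :
  ultrafilter r -> r A -> (forall x, A x -> B x) -> r B.
Proof. intros (_&_&H&_) ; eauto. Qed.
Lemma r_inter {T : Type} (r : (T -> Prop) -> Prop) (A B : T -> Prop) :
  ultrafilter r -> r A -> r B -> r (fun x => A x /\ B x).
Proof. intros (_&_&_&H&_) ; eauto. Qed.
Lemma r_full {T : Type} (r : (T -> Prop) -> Prop) (B : T -> Prop) :
  ultrafilter r -> (forall x, B x) -> r B.
Proof. intros U H. eapply r_mono; [exact U| exact (proj1 U) |]. simpl; auto. Qed.
Lemma r_list {T I : Type} (r : (T -> Prop) -> Prop) (L : list I) (B : I -> T -> Prop) :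
  ultrafilter r -> (forall i, In i L -> r (B i)) -> r (fun y => forall i, In i L -> B i y).
Proof.
  intros U. induction L as [|a L IH]; intros H.
  - apply r_full; [auto|]. intros x i [].
  - apply (r_mono r (fun x => B a x /\ (forall i, In i L -> B i x))); [exact U| apply r_inter; [exact U| apply (H a); left; auto| apply IH; intros; apply H; right; auto]|].
    simpl. intros x [H1 H2] i [e|Hi]; [subst; auto| auto].
Qed.


Definition star {T : Type} (op : T -> T -> T) (r : (T -> Prop) -> Prop) (A : T -> Prop) : T -> Prop :=
  fun x => A x /\ r (fun y => A (op x y)).

Lemma star_r {T : Type} op r (A : T -> Prop) : ultrafilter r -> idempotent op r -> r A -> r (star op r A).
Proof.
  intros U I HA. unfold star. apply (r_inter r A (fun x => r (fun y => A (op x y)))); auto. apply I in HA. exact HA.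
Qed.

Lemma star_closed {T : Type} op r (A : T -> Prop) :
  (forall x y z, op x (op y z) = op (op x y) z) ->
  ultrafilter r -> idempotent op r -> forall x, star op r A x -> r (fun y => star op r A (op x y)).
Proof.
  intros As U I x [Ax Hx]. eapply r_mono; [exact U| apply (star_r op r _ U I Hx)|].
  intros y [H1 H2]. split; auto. eapply r_mono; [exact U| exact H2|].
  intros z. simpl. rewrite As. auto.
Qed.

Lemma xaux_shift {T : Type} op (a : nat -> T) t f N k : forall j,
  xaux op a t (fun m => f (m + N)) k j = xaux op a (fun i => t i + N) f k j.
Proof. induction k; intros j; simpl; [auto| rewrite IHk; auto]. Qed.

Lemma lprod_cons {T : Type} op (As : forall x y z : T, op x (op y z) = op (op x y) z) g m :
  lprod op g (S m) = op (g 1) (lprod op (fun i => g (S i)) m).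
Proof.
  induction m; simpl; [auto|]. simpl in IHm. rewrite IHm. rewrite As. auto.
Qed.

Lemma chain_build {A : Type} (Inv : A -> nat -> Prop) (agree : A -> A -> nat -> Prop) (a0 : A)
  (H0 : Inv a0 0) (step : forall n a, Inv a n -> exists a', Inv a' (S n) /\ agree a a' n) :
  exists sq : nat -> A, (forall n, Inv (sq n) n) /\ forall n, agree (sq n) (sq (S n)) n.
Proof.
  assert (st : forall n a, Inv a n -> {a' | Inv a' (S n) /\ agree a a' n}).
  { intros n a Ha. apply constructive_indefinite_description. auto. }
  pose (g := fix g n : {a | Inv a n} := match n with 0 => exist _ a0 H0
     | S m => let (a, Ha) := g m in exist _ (proj1_sig (st m a Ha)) (proj1 (proj2_sig (st m a Ha))) end).
  exists (fun n => proj1_sig (g n)). split.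
  - intros n. exact (proj2_sig (g n)).
  - intros n. change (g (S n)) with (let (a, Ha) := g n in
        exist (fun a => Inv a (S n)) (proj1_sig (st n a Ha)) (proj1 (proj2_sig (st n a Ha)))).
    destruct (g n) as [a Ha]. simpl. exact (proj2 (proj2_sig (st n a Ha))).
Qed.

Record V (S : Type) := mkV { vk : nat; va : nat -> S; vt : nat -> nat; vQ : S -> Prop }.
Arguments mkV {S}. Arguments vk {S}. Arguments va {S}. Arguments vt {S}. Arguments vQ {S}.

Definition Xv {S : Type} (op : S -> S -> S) (v : V S) (f : nat -> S) : S :=
  xkatf op (vk v) (va v) (vt v) f.

Definition good' {S : Type} (op : S -> S -> S) (r : (S -> Prop) -> Prop)
  (R : ((nat -> S) -> Prop) -> S -> Prop) (s : ((nat -> S) -> Prop) -> V S)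
  (F : (nat -> S) -> Prop) (v : V S) : Prop :=
  1 <= vk v /\ Jk (vk v) (vt v) /\ r (vQ v) /\ (forall y, vQ v y -> R F y) /\
  (forall y, vQ v y -> r (fun z => vQ v (op y z))) /\
  (forall f, F f -> vQ v (Xv op v f)) /\
  (forall G, Pf G -> proper_subset G F ->
     vt (s G) (vk (s G)) < vt v 1 /\
     forall g, G g -> forall z, vQ v z -> vQ (s G) (op (Xv op (s G) g) z)).

Lemma good_transfer {S : Type} op r R (s s' : ((nat -> S) -> Prop) -> V S) F v :
  good' op r R s F v -> (forall G, Pf G -> proper_subset G F -> s' G = s G) -> good' op r R s' F v.
Proof.
  intros (H1&H2&H3&H4&H5&H6&H7) E. unfold good'.
  split;[auto|split;[auto|split;[auto|split;[auto|split;[auto|split;[auto|]]]]]].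
  intros G0 PG PS. rewrite (E G0 PG PS). apply H7; auto.
Qed.

Definition Inv {S : Type} op r R (s : ((nat -> S) -> Prop) -> V S) (n : nat) : Prop :=
  forall F, Pf F -> sz F n -> good' op r R s F (s F).

Lemma new_exists {S : Type} (op : S -> S -> S)
  (op_assoc : forall x y z, op x (op y z) = op (op x y) z)
  (r : (S -> Prop) -> Prop) (hrJ : in_JS op r) (hr : idempotent op r)
  (R : ((nat -> S) -> Prop) -> (S -> Prop)) (hR : forall F, Pf F -> r (R F))
  s n (HI : Inv op r R s n) (F : (nat -> S) -> Prop) :
  exists v, Pf F -> sz F (Datatypes.S n) -> good' op r R s F v.
Proof.
  destruct hrJ as [U HJ].
  assert (inh : inhabited S).
  { destruct (classic (inhabited S)) as [h|h]; auto. exfalso.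
    destruct U as (U1&U2&U3&_). apply U2. apply (U3 _ _ U1). intros x _. apply h; constructor; auto. }
  destruct inh as [s0].
  destruct (classic (Pf F /\ sz F (Datatypes.S n))) as [[PF [l0 [Hl0 Hlen]]]|NP];
    [| exists (mkV 0 (fun _ => s0) (fun _ => 0) (fun _ => True)); tauto].
  pose (N := sumL (fun l' => vt (s (fun x => In x l')) (vk (s (fun x => In x l')))) (subs l0)).
  pose (B := fun (p : list (nat -> S) * (nat -> S)) (y : S) =>
     (Pf (fun x => In x (fst p)) /\ proper_subset (fun x => In x (fst p)) F /\ In (snd p) (fst p)) ->
     vQ (s (fun x => In x (fst p))) (op (Xv op (s (fun x => In x (fst p))) (snd p)) y)).
  pose (A := fun y => R F y /\ forall p, In p (list_prod (subs l0) l0) -> B p y).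
  assert (rA : r A).
  { apply r_inter; [exact U| apply hR; auto|]. apply r_list; [exact U|].
    intros [l' g] _. destruct (classic (Pf (fun x => In x l') /\ proper_subset (fun x => In x l') F /\ In g l'))
      as [[P1 [P2 P3]]|NH].
    - assert (Hg : good' op r R s (fun x => In x l') (s (fun x => In x l'))).
      { apply HI; auto. eapply sz_proper; [exists l0; split; eauto|exact P2]. }
      destruct Hg as (_&_&_&_&H5&H6&_).
      eapply r_mono; [exact U| apply H5; apply H6; exact P3|]. intros z Hz _. exact Hz.
    - apply r_full; [exact U|]. intros y H. simpl in H. tauto. }
  pose (Q := star op r A).
  assert (rQ : r Q) by (apply star_r; auto).
  pose (F' := fun h : nat -> S => exists f, F f /\ h = (fun m => f (m + N))).
  assert (PF' : Pf F').
  { split.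
    - exists (map (fun f (m : nat) => f (m + N)) l0). intros h. split.
      + intros [f [Ff e]]. subst. apply (in_map (fun f0 (m : nat) => f0 (m + N))). apply Hl0; auto.
      + intros Hi. apply in_map_iff in Hi. destruct Hi as [f [e Hi]]. exists f. split; [apply Hl0; auto| auto].
    - destruct PF as [_ [f Ff]]. exists (fun m => f (m + N)). exists f; auto. }
  destruct (HJ Q rQ F' PF') as [k [Hk [a [t [Jt HQ]]]]].
  exists (mkV k a (fun i => t i + N) Q). intros _ _.
  unfold good'; simpl.
  assert (t1 : 1 <= t 1) by (apply (proj1 Jt); lia).
  split; [auto|]. split.
  { destruct Jt as [J1 J2]. split; intros; [specialize (J1 i H); lia| specialize (J2 i j H H0 H1); lia]. }
  split; [auto|]. split; [intros y [[Hy _] _]; auto|]. split.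
  { intros y Hy. apply star_closed; auto. }
  split.
  { intros f Ff. unfold Xv; simpl. unfold xkatf. rewrite <- xaux_shift. apply HQ. exists f; auto. }
  intros G PG PS.
  destruct (proper_eq F G l0 Hl0 PS) as [l' [Hin e]]. subst G.
  split.
  - assert (vt (s (fun x => In x l')) (vk (s (fun x => In x l'))) <= N).
    { apply (sumL_le (fun l' => vt (s (fun x => In x l')) (vk (s (fun x => In x l'))))). auto. }
    lia.
  - intros g Hg z [[_ Hz] _]. apply (Hz (l', g)).
    + apply in_prod; auto. apply Hl0. apply (proj1 PS). auto.
    + simpl. auto.
Qed.

Lemma step_lemma {S : Type} (op : S -> S -> S)
  (op_assoc : forall x y z, op x (op y z) = op (op x y) z)
  (r : (S -> Prop) -> Prop) (hrJ : in_JS op r) (hr : idempotent op r)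
  (R : ((nat -> S) -> Prop) -> (S -> Prop)) (hR : forall F, Pf F -> r (R F))
  s n (HI : Inv op r R s n) :
  exists s', Inv op r R s' (Datatypes.S n) /\ forall F, sz F n -> s' F = s F.
Proof.
  pose proof (new_exists op op_assoc r hrJ hr R hR s n HI) as H.
  pose (nv := fun F => proj1_sig (constructive_indefinite_description _ (H F))).
  assert (Hnv : forall F, Pf F -> sz F (Datatypes.S n) -> good' op r R s F (nv F)).
  { intros F. exact (proj2_sig (constructive_indefinite_description _ (H F))). }
  exists (fun F => if excluded_middle_informative (sz F n) then s F else nv F).
  split.
  - intros F PF SF. apply good_transfer with (s := s).
    + destruct (excluded_middle_informative (sz F n)) as [e|e].
      * apply HI; auto.
      * apply Hnv; auto.
    + intros G PG PS. destruct (excluded_middle_informative (sz G n)) as [e|e]; auto.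
      exfalso. apply e. eapply sz_proper; eauto.
  - intros F SF. destruct (excluded_middle_informative (sz F n)); tauto.
Qed.

Theorem theorem3p2 (S : Type) (op : S -> S -> S)
  (op_assoc : forall x y z, op x (op y z) = op (op x y) z)
  (r : (S -> Prop) -> Prop)
  (hrJ : in_JS op r) (hr : idempotent op r)
  (R : ((nat -> S) -> Prop) -> (S -> Prop))
  (hR : forall F, Pf F -> r (R F)) :
  exists (mu : ((nat -> S) -> Prop) -> nat)
         (alpha : ((nat -> S) -> Prop) -> nat -> S)
         (tau : ((nat -> S) -> Prop) -> nat -> nat),
    (forall F, Pf F -> 1 <= mu F /\ Jk (mu F) (tau F)) /\
    (forall F G, Pf F -> Pf G -> proper_subset F G ->
       tau F (mu F) < tau G 1) /\
    (forall (m : nat) (Gs : nat -> ((nat -> S) -> Prop)) (fs : nat -> nat -> S),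
       1 <= m ->
       (forall i, 1 <= i <= m -> Pf (Gs i)) ->
       (forall i, 1 <= i < m -> proper_subset (Gs i) (Gs (i + 1))) ->
       (forall i, 1 <= i <= m -> Gs i (fs i)) ->
       R (Gs 1)
         (lprod op (fun i => xkatf op (mu (Gs i)) (alpha (Gs i)) (tau (Gs i)) (fs i))
                (m - 1))).
Proof.
  assert (inh : inhabited S).
  { destruct (classic (inhabited S)) as [h|h]; auto. exfalso.
    destruct hrJ as [U _]. destruct U as (U1&U2&U3&_). apply U2. apply (U3 _ _ U1).
    intros x _. apply h; constructor; auto. }
  destruct inh as [s0].
  pose (st0 := fun _ : (nat -> S) -> Prop => mkV 0 (fun _ => s0) (fun _ => 0) (fun _ => True)).
  assert (H0 : Inv op r R st0 0).
  { intros F [_ [f Ff]] [l [Hl Hn]]. exfalso. destruct l; [apply Hl in Ff; destruct Ff| simpl in Hn; lia]. }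
  destruct (chain_build (Inv op r R) (fun a a' n => forall F, sz F n -> a' F = a F) st0 H0
      (fun n a => step_lemma op op_assoc r hrJ hr R hR a n)) as [sq [Hsq Hag]].
  assert (agm : forall n m F, sz F n -> n <= m -> sq m F = sq n F).
  { intros n m F Sn Hm. induction Hm; auto. rewrite Hag; auto. eapply sz_mono; eauto. }
  pose (Nf := fun F : (nat -> S) -> Prop => epsilon (inhabits 0) (fun n => sz F n)).
  pose (glob := fun F => sq (Nf F) F).
  assert (gag : forall F n, sz F n -> glob F = sq n F).
  { intros F n Sn. unfold glob. assert (SN : sz F (Nf F)) by (apply epsilon_spec; eauto).
    rewrite <- (agm (Nf F) (max n (Nf F)) F SN) by lia.
    apply agm; auto; lia. }
  assert (Hg : forall F, Pf F -> good' op r R glob F (glob F)).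
  { intros F PF. destruct PF as [[l Hl] Hne].
    assert (SF : sz F (length l)) by (exists l; split; auto).
    rewrite (gag F _ SF). apply good_transfer with (s := sq (length l)).
    - apply Hsq; auto. split; [exists l; auto| auto].
    - intros G PG PS. apply gag. eapply sz_sub; eauto. apply (proj1 PS). }
  exists (fun F => vk (glob F)), (fun F => va (glob F)), (fun F => vt (glob F)).
  split; [|split].
  - intros F PF. destruct (Hg F PF) as (H1&H2&_). auto.
  - intros F G PF PG PS. destruct (Hg G PG) as (_&_&_&_&_&_&H7). apply H7; auto.
  - assert (chain : forall m (Gs : nat -> ((nat -> S) -> Prop)) (fs : nat -> nat -> S),
       (forall i, 1 <= i <= Datatypes.S m -> Pf (Gs i)) ->
       (forall i, 1 <= i < Datatypes.S m -> proper_subset (Gs i) (Gs (i + 1))) ->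
       (forall i, 1 <= i <= Datatypes.S m -> Gs i (fs i)) ->
       vQ (glob (Gs 1)) (lprod op (fun i => Xv op (glob (Gs i)) (fs i)) m)).
    { induction m as [|m IH]; intros Gs fs HP HS HF.
      - simpl. destruct (Hg (Gs 1) (HP 1 ltac:(lia))) as (_&_&_&_&_&H6&_). apply H6. apply HF; lia.
      - rewrite lprod_cons by auto.
        specialize (IH (fun i => Gs (Datatypes.S i)) (fun i => fs (Datatypes.S i))).
        simpl in IH.
        assert (Hz := IH ltac:(intros i Hi; apply HP; lia)
                        ltac:(intros i Hi; replace (Datatypes.S (i + 1)) with (Datatypes.S i + 1) by lia; apply HS; lia)
                        ltac:(intros i Hi; apply HF; lia)).
        destruct (Hg (Gs 2) (HP 2 ltac:(lia))) as (_&_&_&_&_&_&H7).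
        apply (H7 (Gs 1) (HP 1 ltac:(lia)) (HS 1 ltac:(lia))); [apply HF; lia| exact Hz]. }
    intros m Gs fs Hm HP HS HF. destruct m as [|m]; [lia|].
    destruct (Hg (Gs 1) (HP 1 ltac:(lia))) as (_&_&_&H4&_).
    apply H4. replace (Datatypes.S m - 1) with m by lia. apply chain; auto.
Qed.
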